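(* In the setting described in the context, assume $\mathcal{A}$ satisfies the Deep-$\mathfrak{M}$-Null Space Property with constants $\gamma\ge1$, $\rho>0$, and let $\sigma_{\mathfrak{M}}>0$ be a Deep-lower-RIP constant of $\mathcal{A}$ with regard to $\mathfrak{M}$. Let $\overline{\mathcal{S}}\in\mathfrak{M}$, $\overline{\mathbf{h}}\in\mathbb{R}^{S\times K}_{\overline{\mathcal{S}}}$, $\delta\ge0$, and $X=M_1(\overline{\mathbf{h}}_1)\cdots M_K(\overline{\mathbf{h}}_K)+e$ with $\|e\|\le\delta$. Let $\mathcal{S}^*\in\mathfrak{M}$ and $\mathbf{h}^*\in\mathbb{R}^{S\times K}_{\mathcal{S}^*}$, and set $\eta=\|M_1(\mathbf{h}^*_1)\cdots M_K(\mathbf{h}^*_K)-X\|$. If $\eta+\delta\le\rho$, then $$\|P(\mathbf{h}^* )-P(\overline{\mathbf{h}})\|\le\frac{\gamma}{\sigma_{\mathfrak{M}}}(\delta+\eta).$$ Moreover, if $\frac{\gamma}{\sigma_{\mathfrak{M}}}(\delta+\eta)\le\frac12\max\left(\|P(\mathbf{h}^* )\|_\infty,\|P(\overline{\mathbf{h}})\|_\infty\right)$, then for every $p\in[1,\infty]$, $$d_p([\mathbf{h}^*],[\overline{\mathbf{h}}])\le 7(KS)^{\frac1p}\min\left(\|P(\overline{\mathbf{h}})\|_\infty^{\frac1K-1},\|P(\mathbf{h}^* )\|_\infty^{\frac1K-1}\right)\frac{\gamma}{\sigma_{\mathfrak{M}}}(\delta+\eta).$$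
   Context: Let $K,S\ge 1$ and $m_1,\dots,m_{K+1}$ be positive integers, $\mathbb{N}_S=\{1,\dots,S\}$, and for $k=1,\dots,K$ let $M_k:\mathbb{R}^S\to\mathbb{R}^{m_k\times m_{k+1}}$ be linear. Parameters are $\mathbf{h}=(\mathbf{h}_1,\dots,\mathbf{h}_K)\in\mathbb{R}^{S\times K}$, $\mathbf{h}_k\in\mathbb{R}^S$ with entries $\mathbf{h}_{k,i}$. $\mathbb{R}^{S^K}$ is the space of real order-$K$ tensors with all axes of size $S$, indexed by $\mathbf{i}\in\mathbb{N}_S^K$; $\|\cdot\|$ is the Euclidean norm and $\|\cdot\|_p$ the entrywise $\ell^p$ norm (for vectors, tensors and parameters alike). Segre embedding: $P(\mathbf{h})_{\mathbf{i}}=\mathbf{h}_{1,\mathbf{i}_1}\cdots\mathbf{h}_{K,\mathbf{i}_K}$. The lifting operator $\mathcal{A}:\mathbb{R}^{S^K}\to\mathbb{R}^{m_1\times m_{K+1}}$ is the unique linear map with $\mathcal{A}P(\mathbf{h})=M_1(\mathbf{h}_1)\cdots M_K(\mathbf{h}_K)$ for all $\mathbf{h}$; matrices carry the Frobenius norm. A support is $\mathcal{S}=(\mathcal{S}_1,\dots,\mathcal{S}_K)$, $\mathcal{S}_k\subset\mathbb{N}_S$; unions are componentwise; $\mathbf{i}\in\mathcal{S}$ means $\mathbf{i}_k\in\mathcal{S}_k$ for all $k$. $\mathbb{R}^{S\times K}_{\mathcal{S}}=\{\mathbf{h}:\mathbf{h}_{k,i}=0\text{ whenever }i\notin\mathcal{S}_k\}$,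 $\mathbb{T}_{\mathcal{S}}=\{T: T_{\mathbf{i}}=0\text{ whenever }\mathbf{i}\notin\mathcal{S}\}$, $P_{\mathcal{S}}$ the orthogonal projection onto $\mathbb{T}_{\mathcal{S}}$, and $\mathcal{A}_{\mathcal{S}}=\mathcal{A}P_{\mathcal{S}}$. $\mathfrak{M}$ is a given finite family of supports. Deep-$\mathfrak{M}$-Null Space Property with constants $(\gamma,\rho)$, $\gamma\ge1,\rho>0$: for all $\mathcal{S},\mathcal{S}'\in\mathfrak{M}$, every $T\in P(\mathbb{R}^{S\times K}_{\mathcal{S}})+P(\mathbb{R}^{S\times K}_{\mathcal{S}'})$ with $\|\mathcal{A}_{\mathcal{S}\cup\mathcal{S}'}T\|\le\rho$ and every $T'\in\ker\mathcal{A}_{\mathcal{S}\cup\mathcal{S}'}$ satisfy $\|T\|\le\gamma\|T-P_{\mathcal{S}\cup\mathcal{S}'}T'\|$. Deep-lower-RIP constant: a number $\sigma_{\mathfrak{M}}>0$ such that for all $\mathcal{S},\mathcal{S}'\in\mathfrak{M}$ and all $T$ in the orthogonal complement of $\ker\mathcal{A}_{\mathcal{S}\cup\mathcal{S}'}$, $\sigma_{\mathfrak{M}}\|P_{\mathcal{S}\cup\mathcal{S}'}T\|\le\|\mathcal{A}_{\mathcal{S}\cup\mathcal{S}'}T\|$. Metric $d_p$: let $\mathbb{R}^{S\times K}_*=\{\mathbf{h}:\mathbf{h}_k\ne0\ \forall k\}$; $\mathbf{h}\sim\mathbf{g}$ iff there are $\lambda_1,\dots,\lambda_K\in\mathbb{R}$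 with $\prod_k\lambda_k=1$ and $\mathbf{h}_k=\lambda_k\mathbf{g}_k$ for all $k$; $[\mathbf{h}]$ is the class of $\mathbf{h}$. With $\mathbb{R}^{S\times K}_{diag}=\{\mathbf{h}\in\mathbb{R}^{S\times K}_*:\|\mathbf{h}_k\|_\infty=\|\mathbf{h}_1\|_\infty\ \forall k\}$, define for $\mathbf{h},\mathbf{g}\in\mathbb{R}^{S\times K}_*$: $d_p([\mathbf{h}],[\mathbf{g}])=\inf\{\|\mathbf{h}'-\mathbf{g}'\|_p:\mathbf{h}'\in[\mathbf{h}]\cap\mathbb{R}^{S\times K}_{diag},\ \mathbf{g}'\in[\mathbf{g}]\cap\mathbb{R}^{S\times K}_{diag}\}$. *)

(* Defs.v *)
From HB Require Import structures.
From mathcomp Require Import all_boot all_order all_algebra.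
From mathcomp Require Import all_classical all_reals all_analysis.
Set Implicit Arguments. Unset Strict Implicit. Unset Printing Implicit Defensive.
Import Order.TTheory GRing.Theory Num.Theory.
Local Open Scope ring_scope.
Local Open Scope classical_set_scope.

(* Conventions: the K layers are indexed 0..K-1 (paper: 1..K); the matrix
   dimensions m_1..m_{K+1} of the paper are m 0 .. m K.
   Parameters h in R^{S x K} are matrices 'M_(S,K): h i k = h_{k,i},
   the column k is h_k.
   Tensors in R^{S^K} are finite functions on multi-indices 'I_K -> 'I_S.
   Supports are K-tuples of subsets of 'I_S. *)

Section Defs.
Variable R : realType.

Definition frob {p q : nat} (A : 'M[R]_(p, q)) : R :=
  Num.sqrt (\sum_i \sum_j A i j ^+ 2).

Definition supnorm (I : finType) (f : I -> R) : R := \big[Num.max/0]_i `|f i|.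

Definition lpnorm (I : finType) (p : \bar R) (f : I -> R) : R :=
  match p with
  | EFin q => (\sum_i `|f i| `^ q) `^ q^-1
  | +oo%E => supnorm f
  | -oo%E => 0
  end.

Definition root_factor (p : \bar R) (n : nat) : R :=
  match p with
  | EFin q => n%:R `^ q^-1
  | _ => 1
  end.

Variables K S : nat.

Definition tnorm (T : {ffun {ffun 'I_K -> 'I_S} -> R}) : R :=
  Num.sqrt (\sum_i T i ^+ 2).
Definition tdot (T U : {ffun {ffun 'I_K -> 'I_S} -> R}) : R :=
  \sum_i T i * U i.

Definition segre (h : 'M[R]_(S, K)) : {ffun {ffun 'I_K -> 'I_S} -> R} :=
  [ffun i : {ffun 'I_K -> 'I_S} => \prod_(k : 'I_K) h (i k) k].

(* column k of h, for a natural number k (zero if k >= K; only used for k < K) *)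
Definition hcol (h : 'M[R]_(S, K)) (k : nat) : 'cV[R]_S :=
  \col_i oapp (fun k' : 'I_K => h i k') 0 (insub k).

Fixpoint prodM (m : nat -> nat) (M : forall k : nat, 'cV[R]_S -> 'M[R]_(m k, m k.+1))
  (h : 'M[R]_(S, K)) (n : nat) : 'M[R]_(m 0%N, m n) :=
  match n return 'M[R]_(m 0%N, m n) with
  | 0%N => 1%:M
  | n'.+1 => prodM M h n' *m M n' (hcol h n')
  end.

Definition supU (A B : {ffun 'I_K -> {set 'I_S}}) : {ffun 'I_K -> {set 'I_S}} :=
  [ffun k => A k :|: B k].
Definition in_supp (i : {ffun 'I_K -> 'I_S}) (A : {ffun 'I_K -> {set 'I_S}}) : bool :=
  [forall k, i k \in A k].
Definition param_on (A : {ffun 'I_K -> {set 'I_S}}) (h : 'M[R]_(S, K)) : Prop :=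
  forall i k, i \notin A k -> h i k = 0.
Definition projS (A : {ffun 'I_K -> {set 'I_S}}) (T : {ffun {ffun 'I_K -> 'I_S} -> R}) :
  {ffun {ffun 'I_K -> 'I_S} -> R} :=
  [ffun i : {ffun 'I_K -> 'I_S} => if in_supp i A then T i else 0].

Variables (mr mc : nat).
Definition AS (A : {ffun {ffun 'I_K -> 'I_S} -> R} -> 'M[R]_(mr, mc))
  (Sp : {ffun 'I_K -> {set 'I_S}}) (T : {ffun {ffun 'I_K -> 'I_S} -> R}) : 'M[R]_(mr, mc) :=
  A (projS Sp T).

Definition deepNSP (Mfam : {set {ffun 'I_K -> {set 'I_S}}})
  (A : {ffun {ffun 'I_K -> 'I_S} -> R} -> 'M[R]_(mr, mc)) (gamma rho : R) : Prop :=
  forall Sp Sp', Sp \in Mfam -> Sp' \in Mfam ->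
  forall T, (exists h h', [/\ param_on Sp h, param_on Sp' h' & T = segre h + segre h']) ->
  frob (AS A (supU Sp Sp') T) <= rho ->
  forall T', AS A (supU Sp Sp') T' = 0 ->
  tnorm T <= gamma * tnorm (T - projS (supU Sp Sp') T').

(* sigma is a Deep-lower-RIP constant (positivity stated separately) *)
Definition deepLowerRIP (Mfam : {set {ffun 'I_K -> {set 'I_S}}})
  (A : {ffun {ffun 'I_K -> 'I_S} -> R} -> 'M[R]_(mr, mc)) (sigma : R) : Prop :=
  forall Sp Sp', Sp \in Mfam -> Sp' \in Mfam ->
  forall T, (forall T', AS A (supU Sp Sp') T' = 0 -> tdot T T' = 0) ->
  sigma * tnorm (projS (supU Sp Sp') T) <= frob (AS A (supU Sp Sp') T).

Definition equivp (h g : 'M[R]_(S, K)) : Prop :=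
  exists lam : 'I_K -> R, \prod_k lam k = 1 /\ forall i k, h i k = lam k * g i k.

Definition nonzero_cols (h : 'M[R]_(S, K)) : Prop := forall k : 'I_K, col k h != 0.

Definition diagp (h : 'M[R]_(S, K)) : Prop :=
  nonzero_cols h /\
  forall k j : 'I_K, val j = 0%N ->
    supnorm (fun i => h i k) = supnorm (fun i => h i j).

Definition dp (p : \bar R) (h g : 'M[R]_(S, K)) : R :=
  inf [set r | exists h' g', [/\ equivp h' h, diagp h', equivp g' g, diagp g' &
         r = lpnorm p (fun ij : 'I_S * 'I_K => (h' - g') ij.1 ij.2)]].

End Defs.

(* Main.v *)
Require Import Defs.
From HB Require Import structures.
From mathcomp Require Import all_boot all_order all_algebra.
From mathcomp Require Import all_classical all_reals all_analysis.
From mathcomp Require Import ring lra.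
Set Implicit Arguments. Unset Strict Implicit.
Import Order.TTheory GRing.Theory Num.Theory.
Local Open Scope ring_scope.

Section Gen.
Variable R : realType.

Lemma supnorm_ge0 (I : finType) (f : I -> R) : 0 <= supnorm f.
Proof. rewrite /supnorm; elim/big_ind: _ => //= x y hx hy; rewrite le_max hx //. Qed.

Lemma ler_supnorm (I : finType) (f : I -> R) i : `|f i| <= supnorm f.
Proof. exact: (le_bigmax (0:R) (fun i => `|f i|) i). Qed.

Lemma supnorm_le (I : finType) (f : I -> R) B : 0 <= B -> (forall i, `|f i| <= B) -> supnorm f <= B.
Proof. by move=> B0 H; apply: bigmax_le. Qed.

Lemma supnorm_arg (I : finType) (f : I -> R) (i0 : I) : exists i, supnorm f = `|f i|.
Proof.
have [i _ e] := @eq_bigmax _ _ I (0:R) i0 predT (fun i => `|f i|) isT (fun i _ => normr_ge0 _).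
by exists i; exact: e.
Qed.

End Gen.

Section Gen.
Variable R : realType.

Definition norm2 (I : finType) (f : I -> R) := Num.sqrt (\sum_i f i ^+ 2).
Arguments norm2 {I}.

Lemma CS (I : finType) (x y : I -> R) : \sum_i x i * y i <= norm2 x * norm2 y.
Proof.
set a := norm2 x; set b := norm2 y; set c := \sum_i x i * y i.
have a0 : 0 <= a by apply: sqrtr_ge0.
have b0 : 0 <= b by apply: sqrtr_ge0.
have Ea : \sum_i x i ^+ 2 = a ^+ 2 by rewrite sqr_sqrtr // sumr_ge0 // => i _; apply: sqr_ge0.
have Eb : \sum_i y i ^+ 2 = b ^+ 2 by rewrite sqr_sqrtr // sumr_ge0 // => i _; apply: sqr_ge0.
have E : \sum_i (b * x i - a * y i) ^+ 2 = b^+2 * (\sum_i x i ^+ 2) + a^+2 * (\sum_i y i ^+ 2) - 2 * a * b * c.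
  rewrite /c !mulr_sumr -big_split -sumrB; apply: eq_bigr => i _ /=. ring.
have H : 0 <= \sum_i (b * x i - a * y i) ^+ 2 by rewrite sumr_ge0 // => i _; apply: sqr_ge0.
rewrite E Ea Eb in H.
have [ab0|abp] := eqVneq (a * b) 0.
  move/eqP: ab0; rewrite mulf_eq0 => /orP [] /eqP z.
  - have : \sum_i x i ^+ 2 == 0 by rewrite Ea z expr2 mulr0.
    rewrite psumr_eq0; last by move=> i _; apply: sqr_ge0.
    move=> /allP hx; rewrite /c big1 ?z ?mul0r // => i _.
    have := hx i (mem_index_enum i); rewrite /= sqrf_eq0 => /eqP ->; by rewrite mul0r.
  - have : \sum_i y i ^+ 2 == 0 by rewrite Eb z expr2 mulr0.
    rewrite psumr_eq0; last by move=> i _; apply: sqr_ge0.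
    move=> /allP hy; rewrite /c big1 ?z ?mulr0 // => i _.
    have := hy i (mem_index_enum i); rewrite /= sqrf_eq0 => /eqP ->; by rewrite mulr0.
have abg : 0 < a * b by rewrite lt_def abp mulr_ge0.
have : 0 <= (a * b) * (a * b - c).
  have -> : (a * b) * (a * b - c) = (b ^+ 2 * a ^+ 2 + a ^+ 2 * b ^+ 2 - 2 * a * b * c) / 2.
    by field.
  by rewrite divr_ge0.
rewrite pmulr_rge0 // subr_ge0 //.
Qed.

Lemma norm2_ge0 (I : finType) (x : I -> R) : 0 <= norm2 x.
Proof. exact: sqrtr_ge0. Qed.

Lemma norm2_triangle (I : finType) (x y : I -> R) :
  norm2 (fun i => x i + y i) <= norm2 x + norm2 y.
Proof.
have a0 := norm2_ge0 x; have b0 := norm2_ge0 y.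
have Ea : \sum_i x i ^+ 2 = norm2 x ^+ 2 by rewrite sqr_sqrtr // sumr_ge0 // => i _; apply: sqr_ge0.
have Eb : \sum_i y i ^+ 2 = norm2 y ^+ 2 by rewrite sqr_sqrtr // sumr_ge0 // => i _; apply: sqr_ge0.
rewrite [X in _ <= X](_ : _ = Num.sqrt ((norm2 x + norm2 y)^+2)); last first.
  by rewrite sqrtr_sqr ger0_norm ?addr_ge0.
rewrite {1}/norm2; apply: ler_wsqrtr.
have -> : \sum_i (x i + y i) ^+ 2 = \sum_i x i ^+ 2 + 2 * \sum_i x i * y i + \sum_i y i ^+ 2.
  by rewrite mulr_sumr -!big_split; apply: eq_bigr => i _ /=; ring.
rewrite Ea Eb.
have := CS x y => h.
set A := norm2 x in a0 Ea h *; set B := norm2 y in b0 Eb h *.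
nra.
Qed.

Lemma ler_entry_norm2 (I : finType) (x : I -> R) i : `|x i| <= norm2 x.
Proof.
rewrite /norm2 -sqrtr_sqr; apply: ler_wsqrtr.
rewrite (bigD1 i) //= lerDl sumr_ge0 // => j _; apply: sqr_ge0.
Qed.

End Gen.

Section Proj.
Variable R : realType.
Variable I : finType.
Local Notation V := {ffun I -> R}.

Lemma scaleRE (a x : R) : a *: x = a * x. Proof. by []. Qed.
Definition dot (T U : V) : R := \sum_i T i * U i.

Lemma dotC T U : dot T U = dot U T.
Proof. by apply: eq_bigr => i _; rewrite mulrC. Qed.

Lemma dotDZl a T U W : dot (a *: T + U) W = a * dot T W + dot U W.
Proof.
rewrite /dot mulr_sumr -big_split; apply: eq_bigr => i _ /=; rewrite !ffunE /= scaleRE; ring.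
Qed.

Lemma dotNl T W : dot (- T) W = - dot T W.
Proof. rewrite /dot -sumrN; apply: eq_bigr => i _; rewrite ffunE; ring. Qed.

Lemma dotBl T U W : dot (T - U) W = dot T W - dot U W.
Proof. by rewrite -[T]scale1r dotDZl dotNl mul1r scale1r. Qed.

Lemma dotDr W T U : dot W (T + U) = dot W T + dot W U.
Proof. by rewrite dotC -[T]scale1r dotDZl mul1r scale1r !(dotC W). Qed.

Lemma dot0l W : dot 0 W = 0.
Proof. by rewrite /dot big1 // => i _; rewrite ffunE mul0r. Qed.

Lemma dotxx_ge0 T : 0 <= dot T T.
Proof. by rewrite sumr_ge0 // => i _; rewrite -expr2 sqr_ge0. Qed.

Lemma dotxx_eq0 T : dot T T = 0 -> T = 0.
Proof.
move=> /eqP; rewrite psumr_eq0; last by move=> i _; rewrite -expr2 sqr_ge0.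
move=> /allP h; apply/ffunP => i; rewrite ffunE.
by have := h i (mem_index_enum i); rewrite /= mulf_eq0 orbb => /eqP.
Qed.

Fixpoint inspan (cs : seq V) (y : V) : Prop :=
  match cs with
  | [::] => y = 0
  | c :: cs' => exists t y', inspan cs' y' /\ y = t *: c + y'
  end.

Lemma inspan0 cs : inspan cs 0.
Proof. elim: cs => [|c cs IH] //=; exists 0, 0; split => //; by rewrite scale0r addr0. Qed.

Lemma inspanDZ cs a y1 y2 : inspan cs y1 -> inspan cs y2 -> inspan cs (a *: y1 + y2).
Proof.
elim: cs a y1 y2 => [|c cs IH] a y1 y2 /=.
  by move=> -> ->; rewrite scaler0 addr0.
move=> [t1 [z1 [h1 ->]]] [t2 [z2 [h2 ->]]].
exists (a * t1 + t2), (a *: z1 + z2); split; first exact: IH.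
by rewrite scalerDr scalerA scalerDl; rewrite !addrA; congr (_ + _);
   rewrite -!addrA; congr (_ + _); rewrite addrC.
Qed.

Lemma orth_span cs v y : (forall c, c \in cs -> dot v c = 0) -> inspan cs y -> dot v y = 0.
Proof.
elim: cs y => [|c cs IH] y /= hc.
  by move=> ->; rewrite dotC dot0l.
move=> [t [y' [hy ->]]].
rewrite dotC dotDZl dotC hc ?mem_head // dotC IH ?mulr0 ?addr0 //.
by move=> c' hc'; apply: hc; rewrite in_cons hc' orbT.
Qed.

Lemma proj_exists cs x : exists y, inspan cs y /\ forall c, c \in cs -> dot (x - y) c = 0.
Proof.
elim: cs x => [|c cs IH] x.
  by exists 0; split => // c; rewrite in_nil.
have [y' [hy' oy']] := IH x.
have [yc [hyc oyc]] := IH c.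
set d := c - yc.
have od : forall c', c' \in cs -> dot d c' = 0 by [].
have orth_d_span : forall z, inspan cs z -> dot d z = 0 by move=> z; apply: orth_span.
have orth_x_span : forall z, inspan cs z -> dot (x - y') z = 0 by move=> z; apply: orth_span.
have [d0|dn0] := eqVneq (dot d d) 0.
  have dz : d = 0 by apply: dotxx_eq0.
  exists y'; split.
    by exists 0, y'; split => //; rewrite scale0r add0r.
  move=> c'; rewrite in_cons => /orP [/eqP ->|hc']; last exact: oy'.
  have -> : c = yc by apply/eqP; rewrite -subr_eq0 -/d dz.
  exact: orth_x_span.
set t := dot (x - y') d / dot d d.
exists (t *: c + (- t *: yc + y')); split.
  by exists t, (- t *: yc + y'); split => //; apply: inspanDZ.
have Exy : x - (t *: c + (- t *: yc + y')) = (- t) *: d + (x - y').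
  by apply/ffunP => i; rewrite /d !ffunE !scaleRE /=; ring.
have H1 : forall z, inspan cs z -> dot (x - (t *: c + (- t *: yc + y'))) z = 0.
  by move=> z hz; rewrite Exy dotDZl orth_d_span // mulr0 add0r orth_x_span.
have H2 : dot (x - (t *: c + (- t *: yc + y'))) d = 0.
  by rewrite Exy dotDZl /t mulNr divfK // addNr.
move=> c'; rewrite in_cons => /orP [/eqP ->|hc'].
  have cE : d + yc = c by rewrite /d subrK.
  by rewrite -[X in dot _ X]cE dotDr H2 H1 // addr0.
by rewrite Exy dotDZl od // oy' // mulr0 addr0.
Qed.

Definition delta (i : I) : V := [ffun j => (i == j)%:R].

Lemma decomp (T : V) : T = \sum_i T i *: delta i.
Proof.
apply/ffunP => j; rewrite sum_ffunE (bigD1 j) //= big1 ?addr0.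
  by rewrite !ffunE eqxx scaleRE mulr1.
by move=> i /negbTE nij; rewrite !ffunE nij scaleRE mulr0.
Qed.

Variables p q : nat.

Lemma ker_proj (f : V -> 'M[R]_(p,q)) : linear f ->
  forall T, exists T', f T' = 0 /\ forall W, f W = 0 -> dot (T - T') W = 0.
Proof.
move=> hf T.
have fB := zmod_morphism_linear hf.
have fZ := scalable_linear hf.
have f0 : f 0 = 0 by rewrite -(subrr 0) fB subrr.
have fD : forall x y, f (x + y) = f x + f y.
  move=> x y; have := fB x (- y); rewrite opprK => ->.
  by rewrite -[- y]sub0r fB f0 sub0r opprK.
have fsum : forall G : I -> V, f (\sum_i G i) = \sum_i f (G i).
  by move=> G; apply: (big_morph f fD f0).
pose c (ab : 'I_p * 'I_q) : V := [ffun i => f (delta i) ab.1 ab.2].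
have entry : forall W a b, f W a b = dot W (c (a, b)).
  move=> W a b; rewrite {1}(decomp W) fsum summxE; apply: eq_bigr => i _.
  by rewrite fZ mxE ffunE.
pose cs := [seq c ab | ab <- enum {: 'I_p * 'I_q}].
have [y [hy oy]] := proj_exists cs T.
exists (T - y); split.
  apply/matrixP => a b; rewrite entry mxE.
  by apply: oy; apply: map_f; rewrite mem_enum.
move=> W hW.
have -> : T - (T - y) = y by rewrite opprB addrC subrK.
rewrite dotC; apply: orth_span hy => c' /mapP [[a b] _ ->].
by rewrite -entry hW mxE.
Qed.
End Proj.

Section P1.
Variable R : realType.

Lemma frob_triangle p q (P Q : 'M[R]_(p, q)) : frob (P + Q) <= frob P + frob Q.
Proof.
have E : forall X : 'M[R]_(p,q), frob X = norm2 (fun ab : 'I_p * 'I_q => X ab.1 ab.2).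
  by move=> X; rewrite /frob /norm2 pair_bigA.
rewrite !E; apply: le_trans (norm2_triangle _ _); rewrite le_eqVlt; apply/orP; left; apply/eqP.
by congr norm2; apply: funext => ab; rewrite mxE.
Qed.

Lemma frob_ge0 p q (P : 'M[R]_(p, q)) : 0 <= frob P.
Proof. exact: sqrtr_ge0. Qed.

Variables K S : nat.
Local Notation Tn := {ffun {ffun 'I_K -> 'I_S} -> R}.

Lemma projS_lin (U : {ffun 'I_K -> {set 'I_S}}) : linear (projS (R:=R) U).
Proof.
move=> a u v; apply/ffunP => i; rewrite !ffunE.
by case: ifP => _; rewrite ?ffunE // scaleRE mulr0 addr0.
Qed.

Lemma projSB (U : {ffun 'I_K -> {set 'I_S}}) (T T' : Tn) : projS U (T - T') = projS U T - projS U T'.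
Proof. by apply/ffunP => i; rewrite !ffunE; case: ifP => _; rewrite ?ffunE ?subr0. Qed.

Lemma segre_on (U : {ffun 'I_K -> {set 'I_S}}) (h : 'M[R]_(S, K)) (i : {ffun 'I_K -> 'I_S}) k :
  param_on U h -> i k \notin U k -> segre h i = 0.
Proof.
move=> hp hk; rewrite ffunE (bigD1 k) //= hp ?mul0r //.
Qed.

End P1.

Lemma part1 (R : realType) (K S : nat) (m : nat -> nat)
  (M : forall k : nat, 'cV[R]_S -> 'M[R]_(m k, m k.+1))
  (A : {ffun {ffun 'I_K -> 'I_S} -> R} -> 'M[R]_(m 0%N, m K))
  (Mfam : {set {ffun 'I_K -> {set 'I_S}}})
  (gamma rho sigma delta : R)
  (Sbar : {ffun 'I_K -> {set 'I_S}}) (hbar : 'M[R]_(S, K)) (e : 'M[R]_(m 0%N, m K))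
  (Sstar : {ffun 'I_K -> {set 'I_S}}) (hstar : 'M[R]_(S, K)) :
  (0 < K)%N ->
  linear A ->
  (forall h : 'M[R]_(S, K), A (segre h) = prodM M h K) ->
  1 <= gamma -> deepNSP Mfam A gamma rho ->
  0 < sigma -> deepLowerRIP Mfam A sigma ->
  Sbar \in Mfam -> param_on Sbar hbar ->
  frob e <= delta ->
  Sstar \in Mfam -> param_on Sstar hstar ->
  frob (prodM M hstar K - (prodM M hbar K + e)) + delta <= rho ->
  tnorm (segre hstar - segre hbar) <= gamma / sigma * (delta + frob (prodM M hstar K - (prodM M hbar K + e))).
Proof.
move=> K0 linA hA g1 hN s0 hR hSb hpb he hSs hps hrho.
set eta := frob _ in hrho *.
set T := segre hstar - segre hbar.
set U := supU Sstar Sbar.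
have AB := zmod_morphism_linear linA.
have PT : projS U T = T.
  apply/ffunP => i; rewrite ffunE; case: ifP => // /negbT /forallPn [k hk].
  move: hk; rewrite /U ffunE finset.in_setU negb_or => /andP [h1 h2].
  have z1 := segre_on hps h1; have z2 := segre_on hpb h2; rewrite ffunE in z1; rewrite ffunE in z2.
  by rewrite /T !ffunE z1 z2 subrr.
pose k0 : 'I_K := Ordinal K0.
pose hn : 'M[R]_(S, K) := \matrix_(i, k) (if k == k0 then - hbar i k else hbar i k).
have hpn : param_on Sbar hn.
  by move=> i k hik; rewrite mxE hpb // oppr0 if_same.
have segn : segre hn = - segre hbar.
  apply/ffunP => i; rewrite !ffunE (bigD1 k0) //= [in RHS](bigD1 k0) //= mxE eqxx mulNr.
  congr (- (_ * _)); apply: eq_bigr => k /negbTE hk; by rewrite mxE hk.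
have AT : A T = (prodM M hstar K - (prodM M hbar K + e)) + e.
  by rewrite /T AB !hA opprD addrA subrK.
have fAT : frob (A T) <= eta + delta.
  by rewrite AT; apply: le_trans (frob_triangle _ _) _; rewrite lerD2l.
have ASlin : linear (fun W => AS A U W).
  by move=> a u v; rewrite /AS projS_lin linA.
have [T' [kT' oT']] := ker_proj ASlin T.
have Tdec : T = segre hstar + segre hn by rewrite segn.
have hNT := hN Sstar Sbar hSs hSb T (ex_intro _ hstar (ex_intro _ hn (And3 hps hpn Tdec))).
have hNT' : tnorm T <= gamma * tnorm (T - projS U T').
  by apply: hNT => //; rewrite /AS PT; apply: le_trans fAT _.
have hRT : sigma * tnorm (projS U (T - T')) <= frob (AS A U (T - T')).
  by apply: hR => // W hW; apply: oT'.
have E1 : projS U (T - T') = T - projS U T' by rewrite projSB PT.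
have E2 : AS A U (T - T') = A T by rewrite /AS projSB AB -/(AS A U T') kT' subr0 PT.
rewrite E1 E2 in hRT.
have t0 : 0 <= tnorm (T - projS U T') by apply: sqrtr_ge0.
have h3 : tnorm (T - projS U T') <= (eta + delta) / sigma.
  by rewrite ler_pdivlMr // mulrC; apply: le_trans hRT fAT.
apply: le_trans hNT' _.
rewrite -mulrA ler_pM2l ?(lt_le_trans _ g1) // mulrC [delta + eta]addrC.
exact: h3.
Qed.

Section P2.
Variable R : realType.

Lemma supnormZ (I : finType) (i0 : I) (c : R) (f : I -> R) :
  supnorm (fun i => c * f i) = `|c| * supnorm f.
Proof.
apply/eqP; rewrite eq_le; apply/andP; split.
  apply: supnorm_le; first by rewrite mulr_ge0 // supnorm_ge0.
  by move=> i; rewrite normrM ler_wpM2l // ler_supnorm.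
have [i ->] := supnorm_arg f i0.
by rewrite -normrM; apply: (ler_supnorm (fun i => c * f i)).
Qed.

Lemma supnorm_gt0 (I : finType) (f : I -> R) : 0 < supnorm f -> exists i, f i != 0.
Proof.
move=> h; apply/not_existsP => hn.
have : supnorm f <= 0.
  apply: supnorm_le => // i; have := hn i; move/negP; rewrite negbK => /eqP ->; by rewrite normr0.
by rewrite leNgt h.
Qed.

Variables K S : nat.

Definition ncol (h : 'M[R]_(S, K)) (k : 'I_K) := supnorm (fun i => h i k).

Lemma col_argmax (S0 : (0 < S)%N) (h : 'M[R]_(S, K)) :
  exists j : {ffun 'I_K -> 'I_S}, forall k, ncol h k = `|h (j k) k|.
Proof.
have H : forall k : 'I_K, exists i : 'I_S, ncol h k = `|h i k|.
  by move=> k; apply: (supnorm_arg (fun i => h i k) (Ordinal S0)).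
have [f hf] := fin_all_exists H.
by exists [ffun k => f k] => k; rewrite ffunE.
Qed.

Lemma segre_norm (h : 'M[R]_(S, K)) (i : {ffun 'I_K -> 'I_S}) :
  `|segre h i| = \prod_k `|h (i k) k|.
Proof. by rewrite ffunE normr_prod. Qed.

Lemma supnorm_segre (S0 : (0 < S)%N) (h : 'M[R]_(S, K)) :
  supnorm (segre h) = \prod_k ncol h k.
Proof.
apply/eqP; rewrite eq_le; apply/andP; split.
  apply: supnorm_le; first by apply: prodr_ge0 => k _; apply: supnorm_ge0.
  move=> i; rewrite segre_norm; apply: ler_prod => k _.
  by rewrite normr_ge0 /=; apply: (ler_supnorm (fun i => h i k)).
have [j hj] := col_argmax S0 h.
have -> : \prod_k ncol h k = `|segre h j| by rewrite segre_norm; apply: eq_bigr => k _; apply: hj.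
exact: ler_supnorm.
Qed.

Lemma equivp_segre (h' h : 'M[R]_(S, K)) : equivp h' h -> segre h' = segre h.
Proof.
move=> [lam [p1 hl]]; apply/ffunP => i; rewrite !ffunE.
under eq_bigr do rewrite hl.
by rewrite big_split /= p1 mul1r.
Qed.

Lemma nonzero_cols_pos (S0 : (0 < S)%N) (h : 'M[R]_(S, K)) : nonzero_cols h -> 0 < supnorm (segre h).
Proof.
move=> hn; rewrite supnorm_segre //; apply: prodr_gt0 => k _.
rewrite lt_def supnorm_ge0 andbT; apply/negP => /eqP h0.
have := hn k; apply/negP; rewrite negbK; apply/eqP/matrixP => i z.
rewrite !mxE; apply/eqP; rewrite -normr_eq0 eq_le normr_ge0 andbT.
by rewrite -h0; apply: (ler_supnorm (fun i => h i k)).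
Qed.

End P2.

Section Bal.
Variable R : realType.

Definition sgr (x : R) := `|x| / x.

Lemma sgr2 (x : R) : x != 0 -> sgr x * sgr x = 1.
Proof.
move=> x0; rewrite /sgr mulrACA -expr2 (real_normK (num_real x)) -invfM -expr2 divff //.
by rewrite expf_neq0.
Qed.

Lemma norm_sgr (x : R) : x != 0 -> `|sgr x| = 1.
Proof. by move=> x0; rewrite /sgr normrM normfV normr_id divff // normr_eq0. Qed.

Lemma sgrK (x : R) : x != 0 -> sgr x * x = `|x|.
Proof. by move=> x0; rewrite /sgr divfK. Qed.

Variables K S : nat.

Definition bsign (h : 'M[R]_(S, K)) (j : {ffun 'I_K -> 'I_S}) (k0 k : 'I_K) : R :=
  if k == k0 then \prod_(l | l != k0) sgr (h (j l) l) else sgr (h (j k) k).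

Definition bal (h : 'M[R]_(S, K)) (j : {ffun 'I_K -> 'I_S}) (k0 : 'I_K) (a : R) : 'M[R]_(S, K) :=
  \matrix_(i, k) (a / ncol h k * bsign h j k0 k * h i k).

Section BalProps.
Variables (S0 : (0 < S)%N) (h : 'M[R]_(S, K)) (j : {ffun 'I_K -> 'I_S}) (k0 : 'I_K) (a : R).
Hypotheses (a0 : 0 < a) (aK : a ^+ K = supnorm (segre h)) (npos : forall k, 0 < ncol h k)
  (hj : forall k, h (j k) k != 0).

Lemma norm_bsign k : `|bsign h j k0 k| = 1.
Proof.
rewrite /bsign; case: ifP => _; last exact: norm_sgr.
by rewrite normr_prod big1 // => l _; apply: norm_sgr.
Qed.

Lemma prod_bsign : \prod_k bsign h j k0 k = 1.
Proof.
rewrite (bigD1 k0) //= /bsign eqxx.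
rewrite [X in _ * X](eq_bigr (fun l => sgr (h (j l) l))); last by move=> l /negbTE ->.
by rewrite -big_split /= big1 // => l _; apply: sgr2.
Qed.

Lemma bal_equiv : equivp (bal h j k0 a) h.
Proof.
exists (fun k => a / ncol h k * bsign h j k0 k); split; last by move=> i k; rewrite mxE.
rewrite big_split /= prod_bsign mulr1 big_split /= prodfV prodr_const card_ord aK.
by rewrite supnorm_segre // divff // gt_eqF // prodr_gt0.
Qed.

Lemma norm_bal i k : `|bal h j k0 a i k| = a / ncol h k * `|h i k|.
Proof.
by rewrite mxE !normrM norm_bsign mulr1 normfV (gtr0_norm a0) (gtr0_norm (npos k)).
Qed.

Lemma bal_le i k : `|bal h j k0 a i k| <= a.
Proof.
rewrite norm_bal mulrAC ler_pdivrMr // ler_pM2l //.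
exact: (ler_supnorm (fun i => h i k)).
Qed.

Lemma ncol_bal k : ncol (bal h j k0 a) k = a.
Proof.
rewrite /ncol (_ : (fun i => bal h j k0 a i k) = (fun i => (a / ncol h k * bsign h j k0 k) * h i k)); last first.
  by apply: funext => i; rewrite mxE.
rewrite (supnormZ (Ordinal S0)) normrM norm_bsign mulr1 normrM normfV (gtr0_norm a0) (gtr0_norm (npos k)).
by rewrite divfK // gt_eqF.
Qed.

Lemma bal_diag : diagp (bal h j k0 a).
Proof.
split.
  move=> k; apply/negP => /eqP c0.
  have : ncol (bal h j k0 a) k <= 0.
    apply: supnorm_le => // i.
    have := congr1 (fun M : 'M[R]_(S,1) => M i 0) c0; rewrite !mxE => ->; by rewrite normr0.
  by rewrite ncol_bal leNgt a0.
by move=> k l _; have := ncol_bal k; have := ncol_bal l; rewrite /ncol => -> ->.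
Qed.

Lemma bal_j k : k != k0 -> bal h j k0 a (j k) k = a / ncol h k * `|h (j k) k|.
Proof. by move=> /negbTE kk; rewrite mxE /bsign kk -mulrA sgrK. Qed.

End BalProps.
End Bal.

Section Ineq.
Variable R : realType.

Lemma key_ineq (n : nat) (a c X Y B W x y eps : R) :
  0 < a -> 0 < c -> a ^+ n.+1 = X -> c ^+ n.+1 = Y -> Y <= X + eps -> X - eps <= B ->
  B <= W * c -> 0 <= W -> W <= c ^+ n -> `|a ^+ n * x - W * y| <= eps -> `|y| <= c ->
  `|x - y| * a ^+ n <= 3 * eps.
Proof.
move=> a0 c0 hX hY hYX hB hBW W0 Wc hxy hy.
have e0 : 0 <= eps by apply: le_trans hxy.
set P := a ^+ n in hxy *.
have P0 : 0 < P by rewrite exprn_gt0.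
have cn0 : 0 <= c ^+ n by rewrite exprn_ge0 // ltW.
rewrite exprSr -/P in hX; rewrite exprSr in hY.
have hWc : `|W - P| * c <= 2 * eps.
  have [hca|hac] := lerP c a.
    have cP : c ^+ n <= P by apply: lerXn2r => //; rewrite ?nnegrE ltW.
    rewrite ler0_norm ?subr_le0; last by apply: le_trans cP.
    have : P * c <= P * a by rewrite ler_pM2l.
    nra.
  have cP : P <= c ^+ n by apply: lerXn2r => //; rewrite ?nnegrE ltW.
  have [hWP|hWP] := lerP P W.
    have : P * a <= P * c by rewrite ler_pM2l // ltW.
    have : (W - P) * c <= (c ^+ n - P) * c by rewrite ler_pM2r // lerB.
    nra.
  have : W * c <= c ^+ n * c by rewrite ler_pM2r.
  nra.
have -> : `|x - y| * P = `|(P * x - W * y) + (W - P) * y|.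
  have -> : `|x - y| * P = `|(x - y) * P| by rewrite normrM (gtr0_norm P0).
  by congr `|_|; ring.
apply: le_trans (ler_normD _ _) _.
rewrite normrM.
have : `|W - P| * `|y| <= `|W - P| * c by rewrite ler_wpM2l.
lra.
Qed.

End Ineq.

Section Main.
Variable R : realType.

Lemma same_sign (U V x y : R) : 0 < U * V -> `|U * x - V * y| = `|(`|U| * x - `|V| * y)|.
Proof.
move=> UV.
have [U0|U0|U0] := ltgtP U 0.
- have V0 : V < 0 by move: UV; rewrite nmulr_rgt0.
  by rewrite (ltr0_norm U0) (ltr0_norm V0) -normrN; congr `|_|; ring.
- have V0 : 0 < V by move: UV; rewrite pmulr_rgt0.
  by rewrite (gtr0_norm U0) (gtr0_norm V0).
- by move: UV; rewrite U0 mul0r ltxx.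
Qed.

Lemma prod_pos_sign (a b e : R) : `|a - b| <= e -> e < `|a| -> 0 < a * b.
Proof.
move=> h1 h2.
have h3 : a * (a - b) <= `|a| * `|a - b| by rewrite -normrM ler_norm.
have h4 : `|a| ^+ 2 = a ^+ 2 by rewrite real_normK // num_real.
have h5 : 0 <= `|a| by [].
have h6 : `|a| * `|a - b| <= `|a| * e by rewrite ler_wpM2l.
have e0 : 0 <= e by apply: le_trans h1.
have h7 : `|a| * e < `|a| * `|a| by rewrite ltr_pM2l // (le_lt_trans e0 h2).
have h8 : a * b = a ^+ 2 - a * (a - b) by ring.
rewrite !expr2 in h4.
rewrite h8 expr2 -h4; lra.
Qed.

Variables K S : nat.

Lemma seg_idx (F : 'M[R]_(S, K)) (j : {ffun 'I_K -> 'I_S}) (t : 'I_S) (k : 'I_K) :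
  segre F [ffun l => if l == k then t else j l] = F t k * \prod_(l | l != k) F (j l) l.
Proof.
rewrite ffunE (bigD1 k) //= ffunE eqxx; congr (_ * _).
by apply: eq_bigr => l /negbTE hl; rewrite ffunE hl.
Qed.

Lemma nontrivial (S0 : (0 < S)%N) (k0 : 'I_K) (h g : 'M[R]_(S, K)) (j : {ffun 'I_K -> 'I_S}) (a c eps : R) :
  0 < a -> a ^+ K = supnorm (segre h) -> 0 < c -> c ^+ K = supnorm (segre g) ->
  (forall k, 0 < ncol h k) -> (forall k, 0 < ncol g k) ->
  (forall k, ncol h k = `|h (j k) k|) -> (forall k, g (j k) k != 0) ->
  (forall i, `|segre h i - segre g i| <= eps) -> eps < supnorm (segre h) ->
  forall t k, `|bal h j k0 a t k - bal g j k0 c t k| * a ^+ K.-1 <= 3 * eps.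
Proof.
move=> a0 aK c0 cK nh ng hj gj heps epsX t k.
have K0 : (0 < K)%N by apply: leq_ltn_trans (ltn_ord k0).
have hj0 : forall k, h (j k) k != 0.
  by move=> l; rewrite -normr_eq0 -hj gt_eqF.
set X := supnorm (segre h) in aK epsX.
set Y := supnorm (segre g) in cK.
set h' := bal h j k0 a; set g' := bal g j k0 c.
have eh : segre h' = segre h by apply: equivp_segre; apply: bal_equiv.
have eg : segre g' = segre g by apply: equivp_segre; apply: bal_equiv.
pose u l := h' (j l) l; pose v l := g' (j l) l.
have hu : forall l, `|u l| = a.
  by move=> l; rewrite /u norm_bal // -hj divfK // gt_eqF.
have hu' : forall l, l != k0 -> u l = a.
  by move=> l hl; rewrite /u bal_j // -hj divfK // gt_eqF.
have hv' : forall l, l != k0 -> 0 < v l.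
  move=> l hl; rewrite /v bal_j // mulr_gt0 ?divr_gt0 //.
  by rewrite normr_gt0.
have hvc : forall l, `|v l| <= c by move=> l; apply: bal_le.
set al := segre h j; set be := segre g j.
have hal : \prod_l u l = al by rewrite /al -eh ffunE.
have hbe : \prod_l v l = be by rewrite /be -eg ffunE.
have nal : `|al| = X.
  by rewrite /al segre_norm /X supnorm_segre //; apply: eq_bigr => l _; rewrite hj.
have hab : `|al - be| <= eps by apply: heps.
have albe : 0 < al * be by apply: (prod_pos_sign hab); rewrite nal.
have huv : forall l, 0 < u l * v l.
  move=> l; have [->|hl] := eqVneq l k0; last by rewrite hu' // mulr_gt0 // hv'.
  have : 0 < \prod_l (u l * v l) by rewrite big_split /= hal hbe.
  rewrite (bigD1 k0) //= pmulr_lgt0 // prodr_gt0 // => l' hl'.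
  by rewrite hu' // mulr_gt0 // hv'.
set U := \prod_(l | l != k) u l; set V := \prod_(l | l != k) v l.
have UV : 0 < U * V by rewrite /U /V -big_split /= prodr_gt0.
have nU : `|U| = a ^+ K.-1.
  apply: (mulfI (lt0r_neq0 a0)).
  rewrite -exprS prednK // aK -nal -hal (bigD1 k) //= normrM hu.
  by [].
have nV : `|V| <= c ^+ K.-1.
  have : c * \prod_(l | l != k) c = c * c ^+ K.-1.
    have E : c ^+ K = c * \prod_(l | l != k) c.
      by rewrite -[in LHS](card_ord K) -prodr_const (bigD1 k).
    by rewrite -E -exprS prednK.
  move/(mulfI (lt0r_neq0 c0)) => <-.
  rewrite /V normr_prod; apply: ler_prod => l _; by rewrite normr_ge0 hvc.
have BW : `|be| <= `|V| * c.
  by rewrite -hbe (bigD1 k) //= normrM mulrC ler_wpM2l.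
have XB : X - eps <= `|be|.
  have t1 : `|al| <= `|be| + `|al - be|.
    by have := ler_normD be (al - be); rewrite [be + _]addrC subrK.
  rewrite -nal; lra.
have YX : Y <= X + eps.
  apply: supnorm_le => [|i]; first by rewrite addr_ge0 ?supnorm_ge0 // (le_trans _ hab).
  have := heps i => hi.
  have : `|segre g i| <= `|segre h i| + `|segre h i - segre g i|.
    have E1 : segre h i + (segre g i - segre h i) = segre g i by rewrite addrCA subrr addr0.
    by have := ler_normD (segre h i) (segre g i - segre h i); rewrite E1 -opprB normrN.
  have : `|segre h i| <= X by apply: ler_supnorm.
  lra.
have sl : `|U * h' t k - V * g' t k| <= eps.
  have := heps [ffun l => if l == k then t else j l].
  by rewrite -eh -eg !seg_idx mulrC [V * _]mulrC.
have sl' : `|a ^+ K.-1 * h' t k - `|V| * g' t k| <= eps by rewrite -nU -same_sign.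
have aK' : a ^+ K.-1.+1 = X by rewrite prednK.
have cK' : c ^+ K.-1.+1 = Y by rewrite prednK.
exact: (key_ineq a0 c0 aK' cK' YX XB BW (normr_ge0 V) nV sl' (bal_le k0 c0 ng gj t k)).
Qed.

End Main.

Section Fin.
Variable R : realType.

Lemma root_powK (K : nat) (x : R) : (0 < K)%N -> 0 <= x -> (x `^ K%:R^-1) ^+ K = x.
Proof.
move=> K0 x0; rewrite -powR_mulrn ?powR_ge0 // -powRrM mulVf ?powRr1 //.
by rewrite pnatr_eq0 -lt0n.
Qed.

Lemma lp_bound (I : finType) (p : \bar R) (f : I -> R) (B : R) :
  (1%:E <= p)%E -> 0 <= B -> (forall i, `|f i| <= B) -> lpnorm p f <= root_factor p #|I| * B.
Proof.
case: p => [q| |] //=; try by rewrite leeNy_eq.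
- rewrite lee_fin => q1 B0 hf.
  have q0 : 0 < q by apply: lt_le_trans q1.
  have qi0 : 0 <= q^-1 by rewrite invr_ge0 ltW.
  have h1 : \sum_i `|f i| `^ q <= #|I|%:R * B `^ q.
    have -> : #|I|%:R * B `^ q = \sum_(i : I) B `^ q.
      by rewrite sumr_const mulr_natl.
    apply: ler_sum => i _.
    by apply: (ge0_ler_powR (ltW q0)); rewrite ?nnegrE.
  apply: le_trans (ge0_ler_powR qi0 _ _ h1) _.
  + by rewrite nnegrE sumr_ge0 // => i _; apply: powR_ge0.
  + by rewrite nnegrE mulr_ge0 // powR_ge0.
  rewrite powRM ?powR_ge0 // -powRrM mulfV ?gt_eqF // powRr1 //.
- move=> _ B0 hf; rewrite mul1r; exact: supnorm_le.
Qed.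

End Fin.

Section Part2.
Local Open Scope classical_set_scope.
Variable R : realType.

Lemma lpnorm_ge0 (I : finType) (p : \bar R) (f : I -> R) : 0 <= lpnorm p f.
Proof. by case: p => [q| |] /=; rewrite ?powR_ge0 ?supnorm_ge0. Qed.

Lemma root_factor_ge0 (p : \bar R) n : 0 <= root_factor p n.
Proof. by case: p => [q| |] /=; rewrite ?powR_ge0. Qed.

Variables K S : nat.

Lemma ncol_pos (S0 : (0 < S)%N) (h : 'M[R]_(S, K)) : 0 < supnorm (segre h) -> forall k, 0 < ncol h k.
Proof.
move=> hp k; rewrite lt_def supnorm_ge0 andbT; apply/negP => /eqP n0.
by move: hp; rewrite supnorm_segre // (bigD1 k) //= n0 mul0r ltxx.
Qed.

Lemma supnorm_close (h g : 'M[R]_(S, K)) eps :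
  0 <= eps -> (forall i, `|segre h i - segre g i| <= eps) ->
  supnorm (segre g) <= supnorm (segre h) + eps.
Proof.
move=> e0 heps; apply: supnorm_le => [|i]; first by rewrite addr_ge0 ?supnorm_ge0.
have := heps i => hi.
have : `|segre g i| <= `|segre h i| + `|segre h i - segre g i|.
  have E1 : segre h i + (segre g i - segre h i) = segre g i by rewrite addrCA subrr addr0.
  by have := ler_normD (segre h i) (segre g i - segre h i); rewrite E1 -opprB normrN.
have : `|segre h i| <= supnorm (segre h) by apply: ler_supnorm.
lra.
Qed.

Lemma part2 (K0 : (0 < K)%N) (S0 : (0 < S)%N) (h g : 'M[R]_(S, K)) (eps : R) (p : \bar R) :
  0 <= eps -> (forall i, `|segre h i - segre g i| <= eps) -> (1%:E <= p)%E ->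
  dp p h g <= 7 * root_factor p (K * S)
          * (Num.min (supnorm (segre g)) (supnorm (segre h))) `^ (K%:R^-1 - 1) * eps.
Proof.
move=> e0 heps p1.
set X := supnorm (segre h); set Y := supnorm (segre g).
have rhs0 : 0 <= 7 * root_factor p (K * S) * (Num.min Y X) `^ (K%:R^-1 - 1) * eps.
  by rewrite !mulr_ge0 ?root_factor_ge0 ?powR_ge0.
have [XYp|XY0] := boolP ((0 < X) && (0 < Y)); last first.
  rewrite /dp (_ : [set r | _] = set0) ?inf0 //.
  apply/seteqP; split => r //= [h' [g' [e1 d1 e2 d2 _]]].
  move/negP: XY0; apply; apply/andP; split.
    by rewrite /X -(equivp_segre e1); apply: nonzero_cols_pos => //; case: d1.
  by rewrite /Y -(equivp_segre e2); apply: nonzero_cols_pos => //; case: d2.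
case/andP: XYp => Xp Yp.
have nh := ncol_pos S0 Xp; have ng := ncol_pos S0 Yp.
set m := Num.min Y X.
have mp : 0 < m by rewrite /m lt_min Xp Yp.
pose a := X `^ K%:R^-1; pose c := Y `^ K%:R^-1; pose mu := m `^ K%:R^-1.
have a0 : 0 < a by apply: powR_gt0.
have c0 : 0 < c by apply: powR_gt0.
have mu0 : 0 < mu by apply: powR_gt0.
have aK : a ^+ K = X by apply: root_powK => //; apply: ltW.
have cK : c ^+ K = Y by apply: root_powK => //; apply: ltW.
have muK : mu ^+ K = m by apply: root_powK => //; apply: ltW.
have mua : mu <= a.
  have : mu ^+ K <= a ^+ K by rewrite muK aK /m ge_min lexx orbT.
  by rewrite (ler_pXn2r K0) // nnegrE ltW.
have muc : mu <= c.
  have : mu ^+ K <= c ^+ K by rewrite muK cK /m ge_min lexx.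
  by rewrite (ler_pXn2r K0) // nnegrE ltW.
have mun : mu ^+ K.-1 <= a ^+ K.-1 by apply: (lerXn2r K.-1) => //; rewrite nnegrE ltW.
have mun0 : 0 < mu ^+ K.-1 by rewrite exprn_gt0.
pose k0 : 'I_K := Ordinal K0.
have [jh hjh] := col_argmax S0 h.
have [jg hjg] := col_argmax S0 g.
have YX : Y <= X + eps := supnorm_close e0 heps.
have [h' [g' [e1 d1 e2 d2 hb]]] : exists h' g', [/\ equivp h' h, diagp h', equivp g' g, diagp g' &
    forall t k, `|h' t k - g' t k| * mu ^+ K.-1 <= 3 * eps].
  have hj0 : forall k, h (jh k) k != 0 by move=> k; rewrite -normr_eq0 -hjh gt_eqF.
  have gj0 : forall k, g (jg k) k != 0 by move=> k; rewrite -normr_eq0 -hjg gt_eqF.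
  have [epsX|Xeps] := ltP eps X.
    have gj : forall k, g (jh k) k != 0.
      have : segre g jh != 0.
        apply/negP => /eqP z; have := heps jh; rewrite z subr0.
        have -> : `|segre h jh| = X.
          by rewrite segre_norm /X supnorm_segre //; apply: eq_bigr => l _; rewrite hjh.
        by rewrite leNgt epsX.
      by rewrite ffunE => /prodf_neq0 H k; apply: H.
    exists (bal h jh k0 a), (bal g jh k0 c); split.
    - exact: bal_equiv.
    - exact: bal_diag.
    - exact: bal_equiv.
    - exact: bal_diag.
    - move=> t k; apply: le_trans (nontrivial S0 k0 a0 aK c0 cK nh ng hjh gj heps epsX t k).
      by rewrite ler_wpM2l.
  exists (bal h jh k0 a), (bal g jg k0 c); split.
  - exact: bal_equiv.
  - exact: bal_diag.
  - exact: bal_equiv.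
  - exact: bal_diag.
  - move=> t k.
    have b1 := bal_le k0 a0 nh hj0 t k.
    have b2 := bal_le k0 c0 ng gj0 t k.
    have t1 : `|bal h jh k0 a t k - bal g jg k0 c t k| <= a + c.
      by apply: le_trans (ler_normB _ _) _; rewrite lerD.
    have muc' : mu ^+ K.-1 <= c ^+ K.-1 by apply: (lerXn2r K.-1) => //; rewrite nnegrE ltW.
    have aX : a * a ^+ K.-1 = X by rewrite -exprS prednK.
    have cY : c * c ^+ K.-1 = Y by rewrite -exprS prednK.
    have : a * mu ^+ K.-1 <= a * a ^+ K.-1 by apply: ler_wpM2l => //; apply: ltW.
    have : c * mu ^+ K.-1 <= c * c ^+ K.-1 by apply: ler_wpM2l => //; apply: ltW.
    have : `|bal h jh k0 a t k - bal g jg k0 c t k| * mu ^+ K.-1 <= (a + c) * mu ^+ K.-1.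
      by apply: ler_wpM2r => //; apply: ltW.
    lra.
have hB : forall ij : 'I_S * 'I_K, `|(h' - g') ij.1 ij.2| <= 3 * eps / mu ^+ K.-1.
  by move=> [t k]; rewrite !mxE ler_pdivlMr //; apply: hb.
have Edp : dp p h g <= lpnorm p (fun ij : 'I_S * 'I_K => (h' - g') ij.1 ij.2).
  apply: (ge_inf (E := [set r | exists h' g', [/\ equivp h' h, diagp h', equivp g' g, diagp g' &
         r = lpnorm p (fun ij : 'I_S * 'I_K => (h' - g') ij.1 ij.2)]])).
    exists 0 => r /= [h1 [g1 [_ _ _ _ ->]]]; exact: lpnorm_ge0.
  by exists h', g'.
apply: le_trans Edp _.
apply: le_trans (lp_bound p1 _ hB) _.
  by rewrite divr_ge0 ?mulr_ge0 // ltW.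
rewrite card_prod !card_ord mulnC.
have -> : m `^ (K%:R^-1 - 1) = (mu ^+ K.-1)^-1.
  have E : mu ^+ K = mu * mu ^+ K.-1 by rewrite -exprS prednK.
  have E2 : m `^ (K%:R^-1 - 1) = mu / m.
    rewrite powRB; last by apply/implyP => _; rewrite gt_eqF.
    f_equal; f_equal; have P1 := powRr1 (ltW mp); exact P1.
  rewrite E2 -muK E.
  by rewrite invfM mulrA divff ?gt_eqF // mul1r.
have rf0 := root_factor_ge0 p (K * S).
have q0 : 0 < (mu ^+ K.-1)^-1 by rewrite invr_gt0.
set q := (mu ^+ K.-1)^-1 in q0 *.
set rf := root_factor p (K * S) in rf0 *.
have := mulr_ge0 (mulr_ge0 rf0 (ltW q0)) e0.
nra.
Qed.

End Part2.


Lemma ffunBE (R : realType) (I : finType) (F G : {ffun I -> R}) i : (F - G) i = F i - G i.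
Proof. by rewrite !ffunE. Qed.

Theorem theorem3 (R : realType) (K S : nat) (m : nat -> nat)
  (M : forall k : nat, 'cV[R]_S -> 'M[R]_(m k, m k.+1))
  (A : {ffun {ffun 'I_K -> 'I_S} -> R} -> 'M[R]_(m 0%N, m K))
  (Mfam : {set {ffun 'I_K -> {set 'I_S}}})
  (gamma rho sigma delta : R)
  (Sbar : {ffun 'I_K -> {set 'I_S}}) (hbar : 'M[R]_(S, K)) (e : 'M[R]_(m 0%N, m K))
  (Sstar : {ffun 'I_K -> {set 'I_S}}) (hstar : 'M[R]_(S, K)) :
  (0 < K)%N -> (0 < S)%N ->
  (forall k : nat, (k < K)%N -> linear (M k)) ->
  linear A ->
  (forall h : 'M[R]_(S, K), A (segre h) = prodM M h K) ->
  1 <= gamma -> 0 < rho -> deepNSP Mfam A gamma rho ->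
  0 < sigma -> deepLowerRIP Mfam A sigma ->
  Sbar \in Mfam -> param_on Sbar hbar ->
  0 <= delta -> frob e <= delta ->
  Sstar \in Mfam -> param_on Sstar hstar ->
  let X := prodM M hbar K + e in
  let eta := frob (prodM M hstar K - X) in
  eta + delta <= rho ->
  tnorm (segre hstar - segre hbar) <= gamma / sigma * (delta + eta) /\
  (gamma / sigma * (delta + eta)
     <= 2^-1 * Num.max (supnorm (segre hstar)) (supnorm (segre hbar)) ->
   forall p : \bar R, (1%:E <= p)%E ->
   dp p hstar hbar
     <= 7 * root_factor p (K * S)
          * (Num.min (supnorm (segre hbar)) (supnorm (segre hstar))) `^ (K%:R^-1 - 1)
          * (gamma / sigma * (delta + eta))).
Proof.
move=> K0 S0 _ linA hA g1 r0 hN s0 hR hSb hpb d0 he hSs hps X eta hrho.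
have P1 : tnorm (segre hstar - segre hbar) <= gamma / sigma * (delta + eta).
  exact: (part1 K0 linA hA g1 hN s0 hR hSb hpb he hSs hps hrho).
split => // _ p p1.
have eps0 : 0 <= gamma / sigma * (delta + eta).
  have gam0 : 0 <= gamma by apply: le_trans g1; apply: ler01.
  have eta0 : 0 <= eta by apply: frob_ge0.
  by apply: mulr_ge0; [apply: divr_ge0 => //; apply: ltW | apply: addr_ge0].
apply: part2 => // i.
apply: le_trans P1.
have := ler_entry_norm2 (fun i => (segre hstar - segre hbar) i) i.
by rewrite ffunBE.
Qed.
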